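(* Let $n,k\ge1$ be integers and let $\lambda x.\vec t$ be a closed abstraction with $\lambda x.\vec t\in\llbracket\sharp(\mathbb B^n)\multimap\sharp(\mathbb B^k)\rrbracket_\emptyset$. (1) If $k\ge n$, then $\lambda x.\vec t$ represents an isometry $\mathbb C^{2^n}\to\mathbb C^{2^k}$. (2) If $k=n$, then $\lambda x.\vec t$ represents a unitary operator $\mathbb C^{2^n}\to\mathbb C^{2^n}$. Furthermore, if $k<n$, then $\llbracket\sharp(\mathbb B^n)\multimap\sharp(\mathbb B^k)\rrbracket_\emptyset=\emptyset$, i.e. the type is uninhabited.
   Context: **Syntax.** Terms: $t ::= x \mid |0\rangle \mid |1\rangle \mid \mathsf{if}\ t\ \mathsf{then}\ \vec s\ \mathsf{else}\ \vec s \mid \lambda x.\vec t \mid t\,t \mid (t,t) \mid \mathsf{let}\ (x,y)=t\ \mathsf{in}\ \vec t$. Superpositions: $\vec t ::= t \mid \vec 0 \mid \alpha\cdot\vec t \mid \vec t+\vec t$, with $\alpha$ an algebraic complex number. Basis values: $v ::= |0\rangle\mid|1\rangle\mid\lambda x.\vec t\mid(v,v)$. Values are superpositions of basis values. **Equivalence.** Superpositions are taken modulo the vector-space congruence $\equiv$: $+$ is commutative and associative, $\vec0$ is neutral, $0\cdot\vec t\equiv\vec0$, $1\cdot\vec t\equiv\vec t$, $\alpha\cdot(\beta\cdot\vec t)\equiv\alpha\beta\cdot\vec t$, $\alpha\cdot\vec t+\beta\cdot\vec t\equiv(\alpha+\beta)\cdot\vec t$, and $\alpha\cdot(\vec t_1+\vec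 t_2)\equiv\alpha\cdot\vec t_1+\alpha\cdot\vec t_2$. **Linear extension.** Constructors are extended linearly in their evaluated positions: - $s(\sum_i\alpha_i t_i)\triangleq\sum_i\alpha_i\cdot s\,t_i$; - $(\sum_i\alpha_is_i,\sum_j\beta_jt_j)\triangleq\sum_{i,j}\alpha_i\beta_j\cdot(s_i,t_j)$; - $\mathsf{if}$ and $\mathsf{let}$ distribute over a superposed guard or scrutinee. **Reduction $\rightsquigarrow$ (call-by-value, on closed superpositions).** - $\mathsf{if}\ |0\rangle\ \mathsf{then}\ \vec s\ \mathsf{else}\ \vec t\rightsquigarrow\vec s$ and $\mathsf{if}\ |1\rangle\ \mathsf{then}\ \vec s\ \mathsf{else}\ \vec t\rightsquigarrow\vec t$. - $(\lambda x.\vec t)\,v\rightsquigarrow\vec t[v/x]$ for a basis value $v$. - $\mathsf{let}\ (x,y)=(v,w)\ \mathsf{in}\ \vec t\rightsquigarrow\vec t[v/x,w/y]$. - Congruence rules reduce, using the linear extension: inside the guard of $\mathsf{if}$; in the argument of an application; in the function position when the argument is a basis value; in the first component of a pair; in the second component when the first is a basis value; and in the scrutinee of $\mathsf{let}$. - A superposition in canonical form $\sum_i\alpha_it_i+\sum_j\beta_jv_j$ reduces to $\sum_i\alpha_is_i+\sum_j\beta_jv_j$ when each $t_i\rightsquigarrow s_i$. Canonical form means: the superposed terms are pairwise distinct and all coefficients are nonzero. - Reduction is closed under $\equiv$. $\rightsquigarrow^*$ denotes the reflexive transitive closure of $\rightsquigarrow$. **Inner product and unit values.** On closed values, $\langle\sum_i\alpha_iv_i\mid\sum_j\beta_jw_j\rangle=\sum_{i,j}\overline{\alpha_i}\beta_j\delta_{v_i,w_j}$,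 where $\delta$ is the Kronecker delta on basis values. Let $\mathcal S_1$ be the set of closed values $\vec v$ with $|\langle\vec v|\vec v\rangle|^2=1$. **Base and span.** $\mathrm{base}(\vec v)$ is the set of basis values occurring with nonzero coefficient in $\vec v$. For a set $S$ of closed values, $\flat S=\bigcup_{\vec v\in S}\mathrm{base}(\vec v)$, and $\mathsf{span}(S)$ is the set of finite linear combinations of elements of $S$. **Realizability.** $\vec t\Vdash S$ iff $\vec t\rightsquigarrow^*\vec v$ for some $\vec v\in S$ (up to $\equiv$). **Types.** $A ::= X\mid A\multimap A\mid A\Rightarrow A\mid A\times A\mid Q\mid\S A\mid\forall X.A$, where ground types are $Q ::= \mathbb B\mid\sharp Q\mid\S Q\mid Q\times Q$. **Unitary semantics** (for $\tau$ mapping type variables to subsets of $\mathcal S_1$): - $\llbracket X\rrbracket_\tau=\tau(X)$; - $\llbracket\mathbb B\rrbracket_\tau=\{|0\rangle,|1\rangle\}$; - $\llbracket\sharp A\rrbracket_\tau=\mathsf{span}(\llbracket A\rrbracket_\tau)\cap\mathcal S_1$; - $\llbracket\S A\rrbracket_\tau=\llbracket A\rrbracket_\tau$; - $\llbracket A\multimap B\rrbracket_\tau=\{\lambda x.\vec t:\forall\vec v\in\llbracket A\rrbracket_\tau,(\lambda x.\vec t)\vec v\Vdash\llbracket B\rrbracket_\tau\}$; - $\llbracket A\Rightarrow B\rrbracket_\tau=\{\lambda x.\vec t:\forall v\in\flat\llbracket A\rrbracket_\tau,(\lambda x.\vec t)v\Vdash\llbracket B\rrbracket_\tau\}$; - $\llbracket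 A\times B\rrbracket_\tau=\{(\vec v,\vec w):\vec v\in\llbracket A\rrbracket_\tau,\vec w\in\llbracket B\rrbracket_\tau\}$; - $\llbracket\forall X.A\rrbracket_\tau=\bigcap_{R\subseteq\mathcal S_1}\llbracket A\rrbracket_{\tau\cup\{X\mapsto R\}}$. **Qubit notation.** $\mathbb B^1=\mathbb B$ and $\mathbb B^{m+1}=\mathbb B\times\mathbb B^m$. For $0\le i<2^n$ with binary digits $i_1\dots i_n$, let $|i\rangle\triangleq(|i_1\rangle,(|i_2\rangle,\dots(|i_{n-1}\rangle,|i_n\rangle)\dots))$. **Representation.** The linear map $\lfloor\cdot\rfloor$ sends a closed value $\sum_{i=0}^{2^n-1}\alpha_i\cdot|i\rangle$ to the vector $(\alpha_0,\dots,\alpha_{2^n-1})^T\in\mathbb C^{2^n}$. The closed abstraction $\lambda x.\vec t$ represents an operator $\mathcal F:\mathbb C^{2^n}\to\mathbb C^{2^k}$ if, for all $\vec v\in\llbracket\sharp(\mathbb B^n)\rrbracket_\emptyset$ and $\vec w\in\llbracket\sharp(\mathbb B^k)\rrbracket_\emptyset$, we have $(\lambda x.\vec t)\,\vec v\rightsquigarrow^*\vec w$ if and only if $\mathcal F(\lfloor\vec v\rfloor)=\lfloor\vec w\rfloor$. **Isometry and unitarity.** An operator $\mathcal F:\mathbb C^{2^n}\to\mathbb C^{2^k}$ is an isometry if $\langle\mathcal F(u)|\mathcal F(v)\rangle=\langle u|v\rangle$ for all $u,v$. An isometry with $k=n$ is unitary. *)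

(* Defs.v *)
From mathcomp Require Import all_boot all_order all_algebra algC.
From Stdlib Require List.
From Stdlib Require Import ClassicalEpsilon.
Set Implicit Arguments. Unset Strict Implicit. Unset Printing Implicit Defensive.
Import Order.TTheory GRing.Theory Num.Theory.
Local Open Scope ring_scope.

Inductive term : Type :=
| Var  (x : nat)
| Ket0
| Ket1
| Ite  (t : term) (s1 s2 : sup)
| Lam  (x : nat) (b : sup)
| App  (t u : term)
| Pair (t u : term)
| Let  (x y : nat) (t : term) (b : sup)
with sup : Type :=
| STerm  (t : term)
| SZero
| SScale (a : algC) (s : sup)
| SAdd   (s1 s2 : sup).

Inductive tequiv : term -> term -> Prop :=
| teq_refl t : tequiv t t
| teq_sym t u : tequiv t u -> tequiv u t
| teq_trans t u w : tequiv t u -> tequiv u w -> tequiv t w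
| teq_ite t t' s1 s1' s2 s2' :
    tequiv t t' -> sequiv s1 s1' -> sequiv s2 s2' -> tequiv (Ite t s1 s2) (Ite t' s1' s2')
| teq_lam x b b' : sequiv b b' -> tequiv (Lam x b) (Lam x b')
| teq_app t t' u u' : tequiv t t' -> tequiv u u' -> tequiv (App t u) (App t' u')
| teq_pair t t' u u' : tequiv t t' -> tequiv u u' -> tequiv (Pair t u) (Pair t' u')
| teq_let x y t t' b b' :
    tequiv t t' -> sequiv b b' -> tequiv (Let x y t b) (Let x y t' b')
with sequiv : sup -> sup -> Prop :=
| seq_refl s : sequiv s s
| seq_sym s s' : sequiv s s' -> sequiv s' s
| seq_trans s1 s2 s3 : sequiv s1 s2 -> sequiv s2 s3 -> sequiv s1 s3
| seq_term t t' : tequiv t t' -> sequiv (STerm t) (STerm t')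
| seq_scale a s s' : sequiv s s' -> sequiv (SScale a s) (SScale a s')
| seq_add s1 s1' s2 s2' : sequiv s1 s1' -> sequiv s2 s2' -> sequiv (SAdd s1 s2) (SAdd s1' s2')
| seq_addC s1 s2 : sequiv (SAdd s1 s2) (SAdd s2 s1)
| seq_addA s1 s2 s3 : sequiv (SAdd (SAdd s1 s2) s3) (SAdd s1 (SAdd s2 s3))
| seq_add0 s : sequiv (SAdd SZero s) s
| seq_scale0 s : sequiv (SScale 0 s) SZero
| seq_scale1 s : sequiv (SScale 1 s) s
| seq_scaleA a b s : sequiv (SScale a (SScale b s)) (SScale (a * b) s)
| seq_scaleD a b s : sequiv (SAdd (SScale a s) (SScale b s)) (SScale (a + b) s)
| seq_scaleDr a s1 s2 : sequiv (SScale a (SAdd s1 s2)) (SAdd (SScale a s1) (SScale a s2)).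

Fixpoint tclosed (bs : seq nat) (t : term) : bool :=
  match t with
  | Var x => x \in bs
  | Ket0 | Ket1 => true
  | Ite t s1 s2 => [&& tclosed bs t, sclosed bs s1 & sclosed bs s2]
  | Lam x b => sclosed (x :: bs) b
  | App t u | Pair t u => tclosed bs t && tclosed bs u
  | Let x y t b => tclosed bs t && sclosed [:: x, y & bs] b
  end
with sclosed (bs : seq nat) (s : sup) : bool :=
  match s with
  | STerm t => tclosed bs t
  | SZero => true
  | SScale _ s => sclosed bs s
  | SAdd s1 s2 => sclosed bs s1 && sclosed bs s2
  end.

(* substitution of a (closed) term v for the variable x; no capture can
   occur since only closed values are ever substituted. *)
Fixpoint tsubst (x : nat) (v : term) (t : term) : term :=
  match t with
  | Var y => if y == x then v else Var y
  | Ket0 => Ket0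
  | Ket1 => Ket1
  | Ite t s1 s2 => Ite (tsubst x v t) (ssubst x v s1) (ssubst x v s2)
  | Lam y b => if y == x then Lam y b else Lam y (ssubst x v b)
  | App t u => App (tsubst x v t) (tsubst x v u)
  | Pair t u => Pair (tsubst x v t) (tsubst x v u)
  | Let y z t b =>
      Let y z (tsubst x v t) (if (y == x) || (z == x) then b else ssubst x v b)
  end
with ssubst (x : nat) (v : term) (s : sup) : sup :=
  match s with
  | STerm t => STerm (tsubst x v t)
  | SZero => SZero
  | SScale a s => SScale a (ssubst x v s)
  | SAdd s1 s2 => SAdd (ssubst x v s1) (ssubst x v s2)
  end.

Fixpoint is_basis (t : term) : bool :=
  match t with
  | Ket0 | Ket1 | Lam _ _ => true
  | Pair t u => is_basis t && is_basis u
  | _ => false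
  end.

Fixpoint svalue (s : sup) : bool :=
  match s with
  | STerm t => is_basis t
  | SZero => true
  | SScale _ s => svalue s
  | SAdd s1 s2 => svalue s1 && svalue s2
  end.

Definition closed_value (s : sup) : Prop :=
  exists s', sequiv s s' /\ svalue s' && sclosed [::] s'.

Fixpoint sbind (f : term -> sup) (s : sup) : sup :=
  match s with
  | STerm t => f t
  | SZero => SZero
  | SScale a s => SScale a (sbind f s)
  | SAdd s1 s2 => SAdd (sbind f s1) (sbind f s2)
  end.

Definition slift (g : term -> term) (s : sup) : sup := sbind (fun t => STerm (g t)) s.

Definition app_sup (f : term) (s : sup) : sup := slift (App f) s.

Definition pair_sup (s1 s2 : sup) : sup :=
  sbind (fun a => sbind (fun b => STerm (Pair a b)) s2) s1.

Definition sum_terms (l : seq (algC * term)) : sup :=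
  foldr (fun p acc => SAdd (SScale p.1 (STerm p.2)) acc) SZero l.

Definition sum_sups (l : seq (algC * sup)) : sup :=
  foldr (fun p acc => SAdd (SScale p.1 p.2) acc) SZero l.

Inductive tstep : term -> sup -> Prop :=
| ts_if0 s1 s2 : tstep (Ite Ket0 s1 s2) s1
| ts_if1 s1 s2 : tstep (Ite Ket1 s1 s2) s2
| ts_beta x b v : is_basis v -> tstep (App (Lam x b) v) (ssubst x v b)
| ts_let x y v w b :
    is_basis v -> is_basis w -> tstep (Let x y (Pair v w) b) (ssubst y w (ssubst x v b))
| ts_if_guard t s s1 s2 : tstep t s -> tstep (Ite t s1 s2) (slift (fun t' => Ite t' s1 s2) s)
| ts_app_arg f u s : tstep u s -> tstep (App f u) (slift (App f) s)
| ts_app_fun f v s : is_basis v -> tstep f s -> tstep (App f v) (slift (fun f' => App f' v) s)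
| ts_pair_fst t u s : tstep t s -> tstep (Pair t u) (slift (fun t' => Pair t' u) s)
| ts_pair_snd v u s : is_basis v -> tstep u s -> tstep (Pair v u) (slift (Pair v) s)
| ts_let_scrut x y t b s :
    tstep t s -> tstep (Let x y t b) (slift (fun t' => Let x y t' b) s).

(* reduction of superpositions: a superposition in canonical form
   sum_i a_i t_i + sum_j b_j v_j (terms pairwise distinct modulo the
   congruence, coefficients nonzero, v_j basis values) reduces to
   sum_i a_i s_i + sum_j b_j v_j when each t_i reduces to s_i;
   the relation is closed under the congruence. *)
Inductive step : sup -> sup -> Prop :=
| Step (ts : seq (algC * term * sup)) (vs : seq (algC * term)) (S S' : sup) :
    ts <> [::] ->
    sequiv S (SAdd (sum_terms [seq (p.1.1, p.1.2) | p <- ts]) (sum_terms vs)) ->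
    List.ForallOrdPairs (fun t u => ~ tequiv t u)
      ([seq p.1.2 | p <- ts] ++ [seq p.2 | p <- vs]) ->
    all (fun a => a != 0) ([seq p.1.1 | p <- ts] ++ [seq p.1 | p <- vs]) ->
    List.Forall (fun p => tstep p.1.2 p.2) ts ->
    all (fun p => is_basis p.2) vs ->
    sequiv S' (SAdd (sum_sups [seq (p.1.1, p.2) | p <- ts]) (sum_terms vs)) ->
    step S S'.

Inductive msteps : sup -> sup -> Prop :=
| ms_refl s : msteps s s
| ms_step s1 s2 s3 : step s1 s2 -> msteps s2 s3 -> msteps s1 s3.

Definition reduces_to (s w : sup) : Prop := exists s', msteps s s' /\ sequiv s' w.

Definition realizes (s : sup) (S : sup -> Prop) : Prop :=
  exists w, reduces_to s w /\ S w.

Fixpoint flat (s : sup) : seq (algC * term) :=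
  match s with
  | STerm t => [:: (1, t)]
  | SZero => [::]
  | SScale a s => [seq (a * p.1, p.2) | p <- flat s]
  | SAdd s1 s2 => flat s1 ++ flat s2
  end.

Definition delta (v w : term) : algC :=
  if excluded_middle_informative (tequiv v w) then 1 else 0.

Definition ip (s1 s2 : sup) : algC :=
  \sum_(p <- flat s1) \sum_(q <- flat s2) (p.1)^* * q.1 * delta p.2 q.2.

Definition S1 (s : sup) : Prop := closed_value s /\ `|ip s s| ^+ 2 = 1.

Definition coef (s : sup) (b : term) : algC :=
  \sum_(q <- flat s) q.1 * delta q.2 b.

Definition base (v : sup) (b : term) : Prop :=
  is_basis b /\ tclosed [::] b /\ coef v b != 0.

Definition flatS (S : sup -> Prop) (b : term) : Prop := exists v, S v /\ base v b.

Definition span (S : sup -> Prop) (s : sup) : Prop :=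
  exists l : seq (algC * sup), List.Forall (fun p => S p.2) l /\ sequiv s (sum_sups l).

Inductive ty : Type :=
| TVar (X : nat)
| TLolli (A B : ty)
| TArrow (A B : ty)
| TProd (A B : ty)
| TBool
| TSharp (A : ty)
| TSect (A : ty)
| TForall (X : nat) (A : ty).

Definition env := nat -> sup -> Prop.
Definition env0 : env := fun _ _ => False.
Definition env_upd (tau : env) (X : nat) (R : sup -> Prop) : env :=
  fun Y => if Y == X then R else tau Y.

Fixpoint sem (A : ty) (tau : env) : sup -> Prop :=
  match A with
  | TVar X => tau X
  | TBool => fun s => s = STerm Ket0 \/ s = STerm Ket1
  | TSharp A => fun s => span (sem A tau) s /\ S1 s
  | TSect A => sem A tau
  | TLolli A B => fun s => exists x b, s = STerm (Lam x b) /\ tclosed [::] (Lam x b) /\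
      forall v, sem A tau v -> realizes (app_sup (Lam x b) v) (sem B tau)
  | TArrow A B => fun s => exists x b, s = STerm (Lam x b) /\ tclosed [::] (Lam x b) /\
      forall v, flatS (sem A tau) v -> realizes (STerm (App (Lam x b) v)) (sem B tau)
  | TProd A B => fun s => exists v w, sem A tau v /\ sem B tau w /\ s = pair_sup v w
  | TForall X A => fun s => forall R : sup -> Prop, (forall r, R r -> S1 r) ->
      sem A (env_upd tau X R) s
  end.

(* B^1 = B, B^(m+1) = B x B^m  (B^0 is junk, never used) *)
Fixpoint Bn (n : nat) : ty :=
  match n with
  | 0 => TBool
  | 1 => TBool
  | S m => TProd TBool (Bn m)
  end.

Definition bitket (b : nat) : term := if b == 0%N then Ket0 else Ket1.

(* |i> = (|i_1>, (|i_2>, ... (|i_{n-1}>, |i_n>)...)), i_1 most significant *)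
Fixpoint ket (n i : nat) : term :=
  match n with
  | 0 => Ket0
  | 1 => bitket i
  | S m => Pair (bitket (i %/ 2 ^ m)) (ket m (i %% 2 ^ m))
  end.

Definition floorv (n : nat) (v : sup) : 'cV[algC]_(2 ^ n) :=
  \col_(i < 2 ^ n) coef v (ket n i).

Definition represents (n k : nat) (lam : term)
    (F : 'cV[algC]_(2 ^ n) -> 'cV[algC]_(2 ^ k)) : Prop :=
  forall v w, sem (TSharp (Bn n)) env0 v -> sem (TSharp (Bn k)) env0 w ->
    (reduces_to (app_sup lam v) w <-> F (floorv n v) = floorv k w).

Definition cdot (m : nat) (u v : 'cV[algC]_m) : algC := \sum_(i < m) (u i 0)^* * v i 0.

Definition isometry_op (m p : nat) (F : 'cV[algC]_m -> 'cV[algC]_p) : Prop :=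
  forall u v, cdot (F u) (F v) = cdot u v.

Definition unitary_op (m : nat) (F : 'cV[algC]_m -> 'cV[algC]_m) : Prop := isometry_op F.

Arguments represents : clear implicits.

(* Main.v *)
Require Import Defs.
From mathcomp Require Import all_boot all_order all_algebra algC.
From mathcomp Require Import ring.
From Stdlib Require Import ClassicalEpsilon.
Set Implicit Arguments. Unset Strict Implicit. Unset Printing Implicit Defensive.
Import Order.TTheory GRing.Theory Num.Theory.

Scheme tequiv_mind := Induction for tequiv Sort Prop
  with sequiv_mind := Induction for sequiv Sort Prop.
Combined Scheme equiv_mutind from tequiv_mind, sequiv_mind.
Scheme term_mind := Induction for term Sort Prop
  with sup_mind := Induction for sup Sort Prop.
Combined Scheme syn_mutind from term_mind, sup_mind.

Ltac ceq := first [apply teq_refl|apply teq_ite|apply teq_lam|apply teq_app|apply teq_pair|apply teq_let|apply seq_refl|apply seq_addC|apply seq_addA|apply seq_add0|apply seq_scale0|apply seq_scale1|apply seq_scaleA|apply seq_scaleD|apply seq_scaleDr|apply seq_term|apply seq_scale|apply seq_add].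
Ltac ceqs := repeat (first [assumption | ceq]); auto.
Ltac dest_if := match goal with |- context [if ?c then _ else _] => destruct c end.

Lemma subst_equiv_body x v :
  (forall t t', tequiv t t' -> tequiv (tsubst x v t) (tsubst x v t')) /\
  (forall s s', sequiv s s' -> sequiv (ssubst x v s) (ssubst x v s')).
Proof.
apply: equiv_mutind; intros; simpl; try (by ceqs);
  try (by econstructor; eauto).
- dest_if; ceqs.
- ceqs. dest_if; auto.
Qed.

Lemma subst_equiv_val x v v' : tequiv v v' ->
  (forall t, tequiv (tsubst x v t) (tsubst x v' t)) /\
  (forall s, sequiv (ssubst x v s) (ssubst x v' s)).
Proof.
move=> hv; apply: syn_mutind; intros; simpl; try (by ceqs).
- dest_if; [done|ceqs].
- dest_if; ceqs.
- ceqs. dest_if; ceqs.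
Qed.

Lemma ssubst_equiv x v v' b b' : tequiv v v' -> sequiv b b' ->
  sequiv (ssubst x v b) (ssubst x v' b').
Proof.
move=> hv hb. apply: seq_trans. apply: (proj2 (subst_equiv_body x v)). exact hb.
exact: (proj2 (subst_equiv_val x hv)).
Qed.

Definition tshape (t u : term) : Prop :=
  match t, u with
  | Var x, Var y => x = y
  | Ket0, Ket0 => True
  | Ket1, Ket1 => True
  | Ite a s1 s2, Ite a' s1' s2' => [/\ tequiv a a', sequiv s1 s1' & sequiv s2 s2']
  | Lam x b, Lam y b' => x = y /\ sequiv b b'
  | App a c, App a' c' => tequiv a a' /\ tequiv c c'
  | Pair a c, Pair a' c' => tequiv a a' /\ tequiv c c'
  | Let x y a b, Let x' y' a' b' => [/\ x = x', y = y', tequiv a a' & sequiv b b']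
  | _, _ => False
  end.

Lemma tshape_refl t : tshape t t.
Proof. case: t => //=; intros; repeat split; ceqs. Qed.

Lemma tshape_sym t u : tshape t u -> tshape u t.
Proof.
case: t; case: u => //=; intros;
  repeat match goal with H : _ /\ _ |- _ => destruct H | H : and3 _ _ _ |- _ => destruct H
         | H : and4 _ _ _ _ |- _ => destruct H end;
  subst; repeat split; try (apply: teq_sym); try (apply: seq_sym); auto.
Qed.

Lemma tshape_trans t u w : tshape t u -> tshape u w -> tshape t w.
Proof.
case: t; case: u => //=; case: w => //=; intros;
  repeat match goal with H : _ /\ _ |- _ => destruct H | H : and3 _ _ _ |- _ => destruct H
         | H : and4 _ _ _ _ |- _ => destruct H end;
  subst; repeat split; try (apply: teq_trans; eassumption); try (apply: seq_trans; eassumption); auto.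
Qed.

Lemma tequiv_shape t u : tequiv t u -> tshape t u.
Proof.
elim=> /=; intros; try (by split); auto using tshape_refl, tshape_sym.
eapply tshape_trans; eauto.
Qed.

Lemma tequiv_basis t u : tequiv t u -> is_basis t = is_basis u.
Proof. elim => //=; intros; congruence. Qed.

Lemma tstep_nbasis t r : tstep t r -> is_basis t = false.
Proof. elim=> //=; intros; repeat match goal with H: is_basis _ = false |- _ => rewrite H end; by rewrite ?andbF. Qed.

Ltac nb_contra := match goal with H: tstep ?t _ |- _ =>
  (have := tstep_nbasis H; simpl;
   repeat match goal with h: is_true (is_basis _) |- _ => rewrite h end; done) end.

Lemma tstep_det t r r' : tstep t r -> tstep t r' -> r = r'.
Proof.
move=> H; elim: H r'; intros;
  match goal with H': tstep _ _ |- _ => inversion H'; subst end;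
  try nb_contra; try done;
  try (match goal with IH: forall r', tstep ?t r' -> _ = r', h : tstep ?t _ |- _ =>
         by rewrite (IH _ h) end).
Qed.

Lemma sbind_equiv1 f s s' : (forall t t', tequiv t t' -> sequiv (f t) (f t')) ->
  sequiv s s' -> sequiv (sbind f s) (sbind f s').
Proof.
move=> Hf; elim=> /=; intros;
  first [by apply: Hf | by apply: seq_sym | by (apply: seq_trans; eauto) | by ceqs].
Qed.

Lemma sbind_equiv2 f g s : (forall t, sequiv (f t) (g t)) ->
  sequiv (sbind f s) (sbind g s).
Proof. move=> H; elim: s => /=; intros; ceqs. Qed.

Lemma sbind_equiv f g s s' : (forall t t', tequiv t t' -> sequiv (f t) (g t')) ->
  sequiv s s' -> sequiv (sbind f s) (sbind g s').
Proof.
move=> H hs; apply: seq_trans (sbind_equiv1 _ hs) (sbind_equiv2 _ _).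
- move=> t t' e. apply: seq_trans (H _ _ e) _. apply: seq_sym; apply: H; ceqs.
- move=> t; apply: H; ceqs.
Qed.

Lemma slift_equiv g g' s s' : (forall t t', tequiv t t' -> tequiv (g t) (g' t')) ->
  sequiv s s' -> sequiv (slift g s) (slift g' s').
Proof. move=> H; apply: sbind_equiv => t t' e; apply: seq_term; auto. Qed.

Lemma shape_ket0 u : tequiv Ket0 u -> u = Ket0.
Proof. by move/tequiv_shape; case: u. Qed.
Lemma shape_ket1 u : tequiv Ket1 u -> u = Ket1.
Proof. by move/tequiv_shape; case: u. Qed.
Lemma shape_lam x b u : tequiv (Lam x b) u -> exists b', u = Lam x b' /\ sequiv b b'.
Proof. move/tequiv_shape; case: u => //= y b' [-> h]; by exists b'. Qed.
Lemma shape_pair a c u : tequiv (Pair a c) u -> exists a' c', u = Pair a' c' /\ tequiv a a' /\ tequiv c c'.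
Proof. move/tequiv_shape; case: u => //= a' c' [h1 h2]; by exists a', c'. Qed.
Lemma shape_app a c u : tequiv (App a c) u -> exists a' c', u = App a' c' /\ tequiv a a' /\ tequiv c c'.
Proof. move/tequiv_shape; case: u => //= a' c' [h1 h2]; by exists a', c'. Qed.
Lemma shape_ite a s1 s2 u : tequiv (Ite a s1 s2) u -> exists a' s1' s2', u = Ite a' s1' s2' /\ tequiv a a' /\ sequiv s1 s1' /\ sequiv s2 s2'.
Proof. move/tequiv_shape; case: u => //= a' s1' s2' [h1 h2 h3]; by exists a', s1', s2'. Qed.
Lemma shape_let x y a b u : tequiv (Let x y a b) u -> exists a' b', u = Let x y a' b' /\ tequiv a a' /\ sequiv b b'.
Proof. move/tequiv_shape; case: u => //= x' y' a' b' [<- <- h1 h2]; by exists a', b'. Qed.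

Lemma basisE t u : tequiv t u -> is_basis t -> is_basis u.
Proof. by move=> h; rewrite (tequiv_basis h). Qed.

Lemma tsim t r : tstep t r -> forall t', tequiv t t' -> exists r', tstep t' r' /\ sequiv r r'.
Proof.
elim=> {t r}.
- move=> s1 s2 t' /shape_ite [a [s1' [s2' [-> [/shape_ket0 -> [h1 h2]]]]]].
  exists s1'; split=> //; exact: ts_if0.
- move=> s1 s2 t' /shape_ite [a [s1' [s2' [-> [/shape_ket1 -> [h1 h2]]]]]].
  exists s2'; split=> //; exact: ts_if1.
- move=> x b v hv t' /shape_app [a [c [-> [/shape_lam [b' [-> hb]] hc]]]].
  exists (ssubst x c b'); split; last exact: ssubst_equiv.
  apply: ts_beta; exact: basisE hv.
- move=> x y v w b hv hw t' /shape_let [a [b' [-> [/shape_pair [v' [w' [-> [h1 h2]]]] hb]]]].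
  exists (ssubst y w' (ssubst x v' b')); split.
  + by apply: ts_let; apply: basisE; eauto.
  + by apply: ssubst_equiv => //; apply: ssubst_equiv.
- move=> t s s1 s2 _ IH t' /shape_ite [a [s1' [s2' [-> [ha [h1 h2]]]]]].
  have [r' [hr' e]] := IH _ ha.
  eexists; split; first exact: ts_if_guard hr'.
  by apply: slift_equiv e => u u' hu; ceqs.
- move=> f u s _ IH t' /shape_app [a [c [-> [ha hc]]]].
  have [r' [hr' e]] := IH _ hc.
  eexists; split; first exact: ts_app_arg hr'.
  by apply: slift_equiv e => w w' hw; ceqs.
- move=> f v s hv _ IH t' /shape_app [a [c [-> [ha hc]]]].
  have [r' [hr' e]] := IH _ ha.
  eexists; split; first by apply: ts_app_fun hr'; exact: basisE hv.
  by apply: slift_equiv e => w w' hw; ceqs.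
- move=> t u s _ IH t' /shape_pair [a [c [-> [ha hc]]]].
  have [r' [hr' e]] := IH _ ha.
  eexists; split; first exact: ts_pair_fst hr'.
  by apply: slift_equiv e => w w' hw; ceqs.
- move=> v u s hv _ IH t' /shape_pair [a [c [-> [ha hc]]]].
  have [r' [hr' e]] := IH _ hc.
  eexists; split; first by apply: ts_pair_snd hr'; exact: basisE hv.
  by apply: slift_equiv e => w w' hw; ceqs.
- move=> x y t b s _ IH t' /shape_let [a [b' [-> [ha hb]]]].
  have [r' [hr' e]] := IH _ ha.
  eexists; split; first exact: ts_let_scrut hr'.
  by apply: slift_equiv e => w w' hw; ceqs.
Qed.

Definition Red (t : term) : sup :=
  match excluded_middle_informative (exists r, tstep t r) with
  | left H => proj1_sig (constructive_indefinite_description _ H)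
  | right _ => STerm t
  end.

Lemma Red_step t r : tstep t r -> Red t = r.
Proof.
move=> h; rewrite /Red; case: excluded_middle_informative => [H|[]]; last by exists r.
case: constructive_indefinite_description => /= r' h'; exact: tstep_det h' h.
Qed.

Lemma Red_nostep t : ~ (exists r, tstep t r) -> Red t = STerm t.
Proof. by move=> h; rewrite /Red; case: excluded_middle_informative. Qed.

Lemma Red_basis t : is_basis t -> Red t = STerm t.
Proof. move=> hb; apply: Red_nostep => [[r /tstep_nbasis]]; by rewrite hb. Qed.

Lemma Red_equiv t t' : tequiv t t' -> sequiv (Red t) (Red t').
Proof.
move=> e; case: (classic (exists r, tstep t r)) => [[r hr]|hn].
- have [r' [hr' e']] := tsim hr e. by rewrite (Red_step hr) (Red_step hr').
- rewrite (Red_nostep hn) Red_nostep; first by ceqs.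
  move=> [r' hr']; apply: hn. have [r [hr _]] := tsim hr' (teq_sym e). by exists r.
Qed.

Definition N (s : sup) := sbind Red s.

Lemma N_equiv s s' : sequiv s s' -> sequiv (N s) (N s').
Proof. apply: sbind_equiv; exact: Red_equiv. Qed.

Local Open Scope ring_scope.

Definition teqb t u : bool := if excluded_middle_informative (tequiv t u) then true else false.

Lemma teqbP t u : reflect (tequiv t u) (teqb t u).
Proof. rewrite /teqb; case: excluded_middle_informative => h; by constructor. Qed.

Lemma deltaE t u : delta t u = if teqb t u then 1 else 0.
Proof. by rewrite /delta /teqb; case: excluded_middle_informative. Qed.

Lemma teqb_sym t u : teqb t u = teqb u t.
Proof. by apply/teqbP/teqbP; apply: teq_sym. Qed.

Lemma teqb_trans t u w : teqb t u -> teqb u w -> teqb t w.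
Proof. move=> /teqbP h1 /teqbP h2; apply/teqbP; exact: teq_trans h1 h2. Qed.

Lemma teqb_refl t : teqb t t.
Proof. apply/teqbP; exact: teq_refl. Qed.

Lemma teqb_l t t' u : teqb t t' -> teqb t u = teqb t' u.
Proof.
move=> h; apply/idP/idP => h2; [apply: teqb_trans h2; by rewrite teqb_sym|exact: teqb_trans h h2].
Qed.

Lemma teqb_r t u u' : teqb u u' -> teqb t u = teqb t u'.
Proof. move=> h; rewrite teqb_sym (teqb_l _ h) teqb_sym //. Qed.

Lemma delta_sym t u : delta t u = delta u t.
Proof. by rewrite !deltaE teqb_sym. Qed.

Lemma delta_l t t' u : tequiv t t' -> delta t u = delta t' u.
Proof. by move=> /teqbP h; rewrite !deltaE (teqb_l _ h). Qed.

Lemma delta_r t u u' : tequiv u u' -> delta t u = delta t u'.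
Proof. by move=> /teqbP h; rewrite !deltaE (teqb_r _ h). Qed.

Lemma delta_refl t : delta t t = 1.
Proof. by rewrite deltaE teqb_refl. Qed.

Definition lc (l : seq (algC * term)) (u : term) : algC := \sum_(q <- l) q.1 * delta q.2 u.

Lemma coef_lc s u : coef s u = lc (flat s) u.
Proof. by []. Qed.

Lemma cfT t u : coef (STerm t) u = delta t u.
Proof. by rewrite /coef /= big_cons big_nil addr0 mul1r. Qed.

Lemma cf0 u : coef SZero u = 0.
Proof. by rewrite /coef /= big_nil. Qed.

Lemma cfZ a s u : coef (SScale a s) u = a * coef s u.
Proof.
rewrite /coef /= big_map mulr_sumr; apply: eq_bigr => p _; by rewrite mulrA.
Qed.

Lemma cfD s1 s2 u : coef (SAdd s1 s2) u = coef s1 u + coef s2 u.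
Proof. by rewrite /coef /= big_cat. Qed.

Lemma coef_sbind f s u : coef (sbind f s) u = \sum_(p <- flat s) p.1 * coef (f p.2) u.
Proof.
elim: s => /= [t|| a s IH| s1 IH1 s2 IH2].
- by rewrite big_cons big_nil addr0 mul1r.
- by rewrite cf0 big_nil.
- rewrite cfZ IH big_map mulr_sumr; apply: eq_bigr => p _; by rewrite mulrA.
- by rewrite cfD IH1 IH2 big_cat.
Qed.

Lemma coef_r s u u' : tequiv u u' -> coef s u = coef s u'.
Proof. move=> h; apply: eq_bigr => p _; by rewrite (delta_r _ h). Qed.

Lemma coef_sequiv s s' : sequiv s s' -> forall u, coef s u = coef s' u.
Proof.
elim=> {s s'}; intros; rewrite ?cfT ?cfD ?cfZ ?cf0 //; try congruence;
 first [by rewrite (delta_l _ H) | by rewrite addrC | by rewrite addrA | by rewrite add0r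
  | by rewrite mul0r | by rewrite mul1r | by rewrite mulrA | by rewrite mulrDl | by rewrite cfD mulrDr].
Qed.

Ltac tr x := apply: (@seq_trans _ x).

Lemma scale_zero a : sequiv (SScale a SZero) SZero.
Proof.
tr (SScale a (SScale 0 SZero)); first by apply: seq_scale; apply: seq_sym; ceqs.
tr (SScale (a * 0) SZero); first by ceqs.
rewrite mulr0; ceqs.
Qed.

Lemma add0r_s s : sequiv (SAdd s SZero) s.
Proof. tr (SAdd SZero s); ceqs. Qed.

Lemma sum_terms_cat l1 l2 :
  sequiv (sum_terms (l1 ++ l2)) (SAdd (sum_terms l1) (sum_terms l2)).
Proof.
elim: l1 => /= [|p l IH]; first by apply: seq_sym; ceqs.
tr (SAdd (SScale p.1 (STerm p.2)) (SAdd (sum_terms l) (sum_terms l2))); first by ceqs.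
apply: seq_sym; ceqs.
Qed.

Lemma sum_terms_scale a l :
  sequiv (sum_terms [seq (a * p.1, p.2) | p <- l]) (SScale a (sum_terms l)).
Proof.
elim: l => /= [|p l IH]; first by apply: seq_sym; exact: scale_zero.
tr (SAdd (SScale a (SScale p.1 (STerm p.2))) (SScale a (sum_terms l))).
- apply: seq_add => //; apply: seq_sym; ceqs.
- apply: seq_sym; ceqs.
Qed.

Lemma nf s : sequiv s (sum_terms (flat s)).
Proof.
elim: s => /= [t||a s IH|s1 IH1 s2 IH2].
- apply: seq_sym; tr (SScale 1 (STerm t)); [exact: add0r_s|ceqs].
- ceqs.
- apply: seq_sym; tr (SScale a (sum_terms (flat s))); first exact: sum_terms_scale.
  apply: seq_scale; exact: seq_sym.
- apply: seq_sym; tr (SAdd (sum_terms (flat s1)) (sum_terms (flat s2))); first exact: sum_terms_cat.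
  apply: seq_add; exact: seq_sym.
Qed.

Definition flt t (l : seq (algC * term)) := [seq p <- l | ~~ teqb p.2 t].

Lemma split_lc l t :
  sequiv (sum_terms l) (SAdd (SScale (lc l t) (STerm t)) (sum_terms (flt t l))).
Proof.
rewrite /flt; elim: l => /= [|[a u] l IH].
- rewrite /lc big_nil; apply: seq_sym; tr (SAdd SZero SZero); ceqs.
- rewrite /lc big_cons -/(lc l t) /= deltaE.
  case: (boolP (teqb u t)) => h /=.
  + rewrite mulr1.
    tr (SAdd (SScale a (STerm u)) (SAdd (SScale (lc l t) (STerm t)) (sum_terms (flt t l)))).
    { by apply: seq_add; ceqs. }
    tr (SAdd (SAdd (SScale a (STerm t)) (SScale (lc l t) (STerm t))) (sum_terms (flt t l))).
    { apply: seq_sym; tr (SAdd (SScale a (STerm t)) (SAdd (SScale (lc l t) (STerm t)) (sum_terms (flt t l)))).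
      ceqs. apply: seq_add; ceqs; apply: teq_sym; exact/teqbP. }
    apply: seq_add; ceqs.
  + rewrite mulr0 add0r.
    tr (SAdd (SScale a (STerm u)) (SAdd (SScale (lc l t) (STerm t)) (sum_terms (flt t l)))).
    { by apply: seq_add; ceqs. }
    tr (SAdd (SAdd (SScale a (STerm u)) (SScale (lc l t) (STerm t))) (sum_terms (flt t l))).
    { apply: seq_sym; ceqs. }
    tr (SAdd (SAdd (SScale (lc l t) (STerm t)) (SScale a (STerm u))) (sum_terms (flt t l))).
    { apply: seq_add; ceqs. }
    ceqs.
Qed.

Lemma lc_flt l t u : lc (flt t l) u = if teqb u t then 0 else lc l u.
Proof.
rewrite /lc /flt big_filter.
case: (boolP (teqb u t)) => h.
- apply: big1 => p hp; rewrite deltaE.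
  case: (boolP (teqb p.2 u)) => h2; last by rewrite mulr0.
  by rewrite (teqb_trans h2 h) in hp.
- rewrite [in RHS](bigID (fun p => ~~ teqb p.2 t)) /= [X in _ = _ + X]big1 ?addr0 //.
  move=> p; rewrite negbK => hp; rewrite deltaE.
  case: (boolP (teqb p.2 u)) => h2; last by rewrite mulr0.
  by move: h; rewrite (teqb_trans _ hp) // teqb_sym.
Qed.

Lemma size_flt t l : (size (flt t l) <= size l)%N.
Proof. by rewrite size_filter count_size. Qed.

Lemma size_flt_cons t a l : (size (flt t ((a, t) :: l)) <= size l)%N.
Proof. by rewrite /flt /= teqb_refl /=; by rewrite size_filter count_size. Qed.

Lemma lc_complete m : forall l l', (size l + size l' <= m)%N ->
  (forall u, lc l u = lc l' u) -> sequiv (sum_terms l) (sum_terms l').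
Proof.
elim: m => [|m IH] l l'.
- move=> hs _; case: l hs; case: l' => //= *; ceqs.
- move=> hs he.
  have key : forall t, (size (flt t l) + size (flt t l') <= m)%N ->
      sequiv (sum_terms l) (sum_terms l').
  { move=> t hs'.
    tr (SAdd (SScale (lc l t) (STerm t)) (sum_terms (flt t l))); first exact: split_lc.
    apply: seq_sym.
    tr (SAdd (SScale (lc l' t) (STerm t)) (sum_terms (flt t l'))); first exact: split_lc.
    rewrite he; apply: seq_add; first ceqs.
    apply: seq_sym; apply: IH hs' _ => u. by rewrite !lc_flt he. }
  case: l hs he key => [|[a t] l] hs he key.
  + case: l' hs he key => [|[a1 t1] l1] hs he key; first ceqs.
    apply: (key t1); rewrite /= /flt /= teqb_refl /=.
    move: hs; rewrite /= add0n ltnS => hs; apply: leq_trans hs; by rewrite size_filter count_size.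
  + apply: (key t).
    have h1 := size_flt_cons t a l; have h2 := size_flt t l'.
    move: hs; rewrite /= addSn ltnS => hs.
    apply: leq_trans hs; exact: leq_add.
Qed.

Lemma coef_complete s s' : (forall u, coef s u = coef s' u) -> sequiv s s'.
Proof.
move=> h; tr (sum_terms (flat s)); first exact: nf.
apply: seq_sym; tr (sum_terms (flat s')); first exact: nf.
apply: seq_sym; apply: (@lc_complete (size (flat s) + size (flat s'))) => //.
Qed.

Local Open Scope ring_scope.

Definition isval s := forall t, coef s t != 0 -> is_basis t.
Definition good s := forall t, coef s t != 0 -> is_basis t \/ exists r, tstep t r.

Lemma isval_equiv s s' : sequiv s s' -> isval s -> isval s'.
Proof. move=> e h t; rewrite -(coef_sequiv e); exact: h. Qed.
Lemma good_equiv s s' : sequiv s s' -> good s -> good s'.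
Proof. move=> e h t; rewrite -(coef_sequiv e); exact: h. Qed.

Lemma coef_sum_terms l u : coef (sum_terms l) u = lc l u.
Proof.
elim: l => [|p l IH] /=; first by rewrite cf0 /lc big_nil.
by rewrite cfD cfZ cfT IH /lc big_cons.
Qed.

Lemma coef_sum_sups l u : coef (sum_sups l) u = \sum_(p <- l) p.1 * coef p.2 u.
Proof.
elim: l => [|p l IH] /=; first by rewrite cf0 big_nil.
by rewrite cfD cfZ IH big_cons.
Qed.

Lemma N_sum_terms l : N (sum_terms l) = sum_sups [seq (p.1, Red p.2) | p <- l].
Proof. by elim: l => // p l IH; rewrite /N /= in IH *; rewrite IH. Qed.

Lemma sum_sups_terms l : sum_sups [seq (p.1, STerm p.2) | p <- l] = sum_terms l.
Proof. by elim: l => // p l IH; rewrite /N /= in IH *; rewrite IH. Qed.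

Lemma big_nz (T : Type) (l : seq T) (F : T -> algC) :
  \sum_(x <- l) F x != 0 -> exists x, List.In x l /\ F x != 0.
Proof.
elim: l => [|x l IH]; first by rewrite big_nil eqxx.
rewrite big_cons; case: (boolP (F x == 0)) => [/eqP ->|h] H.
- rewrite add0r in H; have [y [hy hF]] := IH H; exists y; split=> //; by right.
- exists x; split=> //; by left.
Qed.

Lemma lc_nz l u : lc l u != 0 -> exists p, List.In p l /\ tequiv p.2 u.
Proof.
move/big_nz => [p [hp hF]]; exists p; split=> //.
move: hF; rewrite deltaE; case: teqbP => // _; by rewrite mulr0 eqxx.
Qed.

Lemma in_all (T : Type) (P : pred T) l x : all P l -> List.In x l -> P x.
Proof. elim: l => //= y l IH /andP [h1 h2] [<-|h] //; exact: IH. Qed.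

Lemma lc_zero l u : List.Forall (fun w => ~ tequiv u w) [seq p.2 | p <- l] -> lc l u = 0.
Proof.
elim: l => [|p l IH] /=; first by rewrite /lc big_nil.
move=> h; inversion h; subst. rewrite /lc big_cons -/(lc l u) IH // deltaE.
case: teqbP => [e|]; last by rewrite mulr0 add0r.
by case: H1; apply: teq_sym.
Qed.

Lemma map_forall (T U : Type) (P : T -> Prop) (f g : T -> U) l :
  List.Forall P l -> (forall x, P x -> f x = g x) -> map f l = map g l.
Proof. elim=> //= x l' h _ IH H; by rewrite H // IH. Qed.

Lemma map_all (T U : Type) (P : pred T) (f g : T -> U) l :
  all P l -> (forall x, P x -> f x = g x) -> map f l = map g l.
Proof. elim: l => //= x l' IH /andP [h1 h2] H; by rewrite H // IH. Qed.

Lemma step_N S S' : step S S' -> [/\ sequiv S' (N S), good S & ~ isval S].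
Proof.
case=> ts vs {}S {}S' hne hS hord hnz hstep hvs hS'.
set D := SAdd _ _ in hS.
have hN : sequiv (N D) S'.
{ apply: seq_sym; apply: seq_trans hS' _.
  rewrite /D (_ : N (SAdd _ _) = SAdd (N (sum_terms [seq (p.1.1, p.1.2) | p <- ts])) (N (sum_terms vs))) //.
  rewrite !N_sum_terms -map_comp -sum_sups_terms.
  apply: seq_add.
  - rewrite (map_forall hstep (g := fun p => (p.1.1, Red p.1.2))); first ceqs.
    by move=> p /= /Red_step ->.
  - rewrite (map_all hvs (g := fun p => (p.1, Red p.2))); first ceqs.
    by move=> p /= /Red_basis ->. }
split.
- apply: seq_trans (seq_sym hN) _; apply: N_equiv; exact: seq_sym.
- move=> t; rewrite (coef_sequiv hS) /D cfD !coef_sum_terms.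
  case: (boolP (lc [seq (p.1.1, p.1.2) | p <- ts] t == 0)) => [/eqP ->|h1].
  + rewrite add0r => /lc_nz [p [hp e]]; left.
    rewrite -(tequiv_basis e); exact: in_all hvs hp.
  + move=> _; have [p [hp e]] := lc_nz h1; right.
    move: hp => /List.in_map_iff [q [hq1 hq2]]; subst p.
    have hq := proj1 (List.Forall_forall _ _) hstep _ hq2.
    have [r [hr _]] := tsim hq e; by exists r.
- rewrite /D in hS; clear hN D hS'.
  case: ts hne hS hord hnz hstep => // q0 ts' _ hS hord hnz hstep hval.
  inversion hord as [|a l hF _]; subst.
  inversion hstep as [|a l hs0 _]; subst.
  move: hnz => /= /andP [hq0 _].
  have hc : coef S q0.1.2 = q0.1.1.
  { rewrite (coef_sequiv hS) cfD !coef_sum_terms /= /lc big_cons -!/(lc _ _) /= delta_refl mulr1.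
    move/List.Forall_app: hF => [hF1 hF2].
    rewrite !lc_zero ?addr0 //; by rewrite -map_comp. }
  have := hval q0.1.2; rewrite hc => /(_ hq0).
  by rewrite (tstep_nbasis hs0).
Qed.

Fixpoint dedup (l : seq term) : seq term :=
  match l with
  | [::] => [::]
  | t :: l' => let r := dedup l' in if has (teqb t) r then r else t :: r
  end.

Definition nteq (a b : term) := ~~ teqb a b.

Lemma dedup_pw l : pairwise nteq (dedup l).
Proof.
elim: l => //= t l IH; case: ifP => // h.
rewrite pairwise_cons IH andbT.
change (all (predC (teqb t)) (dedup l)); by rewrite all_predC h.
Qed.

Lemma dedup_cover l u : List.In u l -> has (teqb u) (dedup l).
Proof.
elim: l => //= t l IH [<-|h].
- case: ifP => //= _; by rewrite teqb_refl.
- case: ifP => //= _; by rewrite IH ?orbT.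
Qed.

Lemma dedup_in l t : List.In t (dedup l) -> List.In t l.
Proof.
elim: l => //= w l IH; case: ifP => _ /=; first by move/IH; right.
case=> [->|/IH]; by [left|right].
Qed.

Definition cinv (g : term -> algC) := forall t t', tequiv t t' -> g t = g t'.

Lemma sumR R u g : pairwise nteq R -> cinv g ->
  \sum_(t <- R) delta u t * g t = if has (teqb u) R then g u else 0.
Proof.
move=> hR hg; elim: R hR => [|t R IH]; first by rewrite big_nil.
rewrite pairwise_cons => /andP [ha hp]; rewrite big_cons IH //= deltaE.
case: (boolP (teqb u t)) => h /=.
- rewrite mul1r.
  have -> : has (teqb u) R = false.
  { apply/negbTE; rewrite -all_predC; apply: sub_all ha => w /=; rewrite /nteq.
    apply: contra => h2; apply: (teqb_trans _ h2); by rewrite teqb_sym. }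
  by rewrite addr0 (hg _ _ (elimT (teqbP _ _) h)).
- by rewrite mul0r add0r.
Qed.

Lemma grouping l R g : pairwise nteq R -> cinv g ->
  (forall u, List.In u [seq p.2 | p <- l] -> has (teqb u) R) ->
  \sum_(p <- l) p.1 * g p.2 = \sum_(t <- R) lc l t * g t.
Proof.
move=> hR hg hcov.
under [RHS]eq_bigr => t _ do rewrite /lc big_distrl /=.
rewrite exchange_big /=.
elim: l hcov => [|p l IH] hcov; first by rewrite !big_nil.
rewrite !big_cons IH; last by move=> u hu; apply: hcov; right.
congr (_ + _).
have := sumR p.2 hR hg; rewrite (hcov p.2 (or_introl erefl)) => <-.
rewrite mulr_sumr; apply: eq_bigr => t _; by rewrite mulrA.
Qed.

Lemma all_filterW (T : Type) (P Q : pred T) l : all P l -> all P (filter Q l).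
Proof. elim: l => //= x l IH /andP [h1 h2]; case: (Q x) => /=; rewrite ?h1 IH //. Qed.

Lemma In_filter (T : Type) (P : pred T) l x : List.In x (filter P l) -> P x /\ List.In x l.
Proof.
elim: l => //= y l IH; case: ifP => hy /=.
- case=> [<-|/IH [h1 h2]]; by [split=> //; left | split=> //; right].
- by move/IH => [h1 h2]; split=> //; right.
Qed.

Lemma In_filter_intro (T : Type) (P : pred T) l x : P x -> List.In x l -> List.In x (filter P l).
Proof.
move=> hx; elim: l => //= y l IH [->|h]; first by rewrite hx; left.
case: (P y) => /=; [right|]; exact: IH.
Qed.

Lemma allrel_filter (r : rel term) (P : pred term) l : symmetric r -> pairwise r l ->
  allrel r (filter P l) (filter (predC P) l).
Proof.
move=> hs; elim: l => // x l IH; rewrite pairwise_cons => /andP [ha hp].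
case: (boolP (P x)) => hx; rewrite /= ?hx ?(negbTE hx) /=.
- rewrite allrel_consl (IH hp) andbT. exact: all_filterW ha.
- rewrite allrel_consr (IH hp) andbT. apply: all_filterW.
  apply: sub_all ha => y /=; by rewrite hs.
Qed.

Lemma pw_fop l : pairwise nteq l -> List.ForallOrdPairs (fun t u => ~ tequiv t u) l.
Proof.
elim: l => [|x l IH]; first by constructor.
rewrite pairwise_cons => /andP [ha hp]; constructor; last exact: IH.
elim: l ha {IH hp} => [|y l IH] /=; first by constructor.
move=> /andP [h1 h2]; constructor; last exact: IH.
by move=> /teqbP; apply/negP.
Qed.

Lemma nteq_sym : symmetric nteq.
Proof. by move=> a b; rewrite /nteq teqb_sym. Qed.

Lemma step_of_good S : good S -> ~ isval S -> step S (N S).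
Proof.
move=> hg hv.
set R := dedup [seq p.2 | p <- flat S].
have hR : pairwise nteq R := dedup_pw _.
have hcov : forall u, List.In u [seq p.2 | p <- flat S] -> has (teqb u) R.
{ move=> u h; exact: dedup_cover. }
set c := coef S.
set L := [seq t <- R | c t != 0].
have hL : pairwise nteq L by apply: pairwise_filter.
have hLc : all (fun t => c t != 0) L by apply: filter_all.
have sumL : forall g, cinv g -> \sum_(p <- flat S) p.1 * g p.2 = \sum_(t <- L) c t * g t.
{ move=> g hgi; rewrite (grouping hR hgi hcov) big_filter.
  rewrite [LHS](bigID (fun t => c t != 0)) /= [X in _ + X]big1 ?addr0 //.
  move=> t /negPn /eqP h; rewrite (_ : lc (flat S) t = 0) ?mul0r //. }
set nb := fun t => ~~ is_basis t.
have splitL : forall F : term -> algC, \sum_(t <- L) F t =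
    \sum_(t <- L | nb t) F t + \sum_(t <- L | ~~ nb t) F t.
{ move=> F; by rewrite (bigID nb). }
apply: (@Step [seq (c t, t, Red t) | t <- filter nb L] [seq (c t, t) | t <- filter (predC nb) L]).
- have [t [ht1 ht2]] : exists t, coef S t != 0 /\ ~~ is_basis t.
  { apply: NNPP => hn; apply: hv => t ht; apply: negbNE; apply/negP => hb.
    apply: hn; by exists t. }
  have E : coef S t = \sum_(t' <- L) c t' * delta t' t.
  { apply: (sumL (fun w => delta w t)) => w w' e; exact: delta_l. }
  move: ht1; rewrite E => /big_nz [t1 [h1 h2]].
  have e : tequiv t1 t.
  { move: h2; rewrite deltaE; case: teqbP => // _; by rewrite mulr0 eqxx. }
  have : List.In t1 (filter nb L) by apply: In_filter_intro => //; rewrite /nb (tequiv_basis e).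
  by case: (filter nb L).
- apply: coef_complete => u; rewrite cfD !coef_sum_terms /lc -map_comp !big_map !big_filter /=.
  have E : coef S u = \sum_(t <- L) c t * delta t u.
  { apply: (sumL (fun w => delta w u)) => w w' e; exact: delta_l. }
  by rewrite E splitL.
- rewrite (_ : forall l, [seq p.1.2 | p <- [seq (c t, t, Red t) | t <- l]] = l);
    last by elim=> //= ? ? ->.
  rewrite (_ : forall l, [seq p.2 | p <- [seq (c t, t) | t <- l]] = l);
    last by elim=> //= ? ? ->.
  apply: pw_fop; rewrite pairwise_cat allrel_filter ?pairwise_filter //; exact: nteq_sym.
- rewrite (_ : forall l, [seq p.1.1 | p <- [seq (c t, t, Red t) | t <- l]] = map c l);
    last by elim=> //= ? ? ->.
  rewrite (_ : forall l, [seq p.1 | p <- [seq (c t, t) | t <- l]] = map c l);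
    last by elim=> //= ? ? ->.
  rewrite all_cat !all_map; apply/andP; split; exact: all_filterW hLc.
- apply/List.Forall_forall => p /List.in_map_iff [t [<- ht]] /=.
  have [hnb hinL] := In_filter ht.
  have hc := in_all hLc hinL.
  case: (hg t hc) => [hb|[r hr]]; first by move: hnb; rewrite /nb hb.
  by rewrite (Red_step hr).
- rewrite all_map; apply: (sub_all _ (filter_all (predC nb) L)) => t /=; by rewrite /nb negbK.
- apply: coef_complete => u; rewrite cfD coef_sum_sups coef_sum_terms /lc coef_sbind.
  have E : \sum_(p <- flat S) p.1 * coef (Red p.2) u = \sum_(t <- L) c t * coef (Red t) u.
  { apply: (sumL (fun w => coef (Red w) u)) => w w' e; apply: coef_sequiv; exact: Red_equiv. }
  rewrite E splitL -map_comp !big_map !big_filter /=; congr (_ + _).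
  apply: eq_bigr => t; rewrite /nb negbK => hb; by rewrite Red_basis // cfT.
Qed.

Local Open Scope ring_scope.

Definition ev (h : term -> algC) (s : sup) := \sum_(p <- flat s) p.1 * h p.2.

Lemma evT h t : ev h (STerm t) = h t.
Proof. by rewrite /ev /= big_cons big_nil addr0 mul1r. Qed.
Lemma ev0 h : ev h SZero = 0.
Proof. by rewrite /ev /= big_nil. Qed.
Lemma evZ h a s : ev h (SScale a s) = a * ev h s.
Proof. rewrite /ev /= big_map mulr_sumr; apply: eq_bigr => p _; by rewrite mulrA. Qed.
Lemma evD h s1 s2 : ev h (SAdd s1 s2) = ev h s1 + ev h s2.
Proof. by rewrite /ev /= big_cat. Qed.

Lemma ev_sequiv h s s' : cinv h -> sequiv s s' -> ev h s = ev h s'.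
Proof.
move=> hh; elim=> {s s'}; intros; rewrite ?evT ?evD ?evZ ?ev0 //; try congruence;
 first [by rewrite (hh _ _ H) | by rewrite addrC | by rewrite addrA | by rewrite add0r
  | by rewrite mul0r | by rewrite mul1r | by rewrite mulrA | by rewrite mulrDl | by rewrite evD mulrDr].
Qed.

Lemma ev_sum_sups h l : ev h (sum_sups l) = \sum_(p <- l) p.1 * ev h p.2.
Proof.
elim: l => [|p l IH] /=; first by rewrite ev0 big_nil.
by rewrite evD evZ IH big_cons.
Qed.

Lemma cinv_delta u : cinv (fun w => delta w u).
Proof. move=> w w' e; exact: delta_l. Qed.

Fixpoint Nn (m : nat) (s : sup) : sup := if m is m'.+1 then N (Nn m' s) else s.

Lemma Nn_S m s : Nn m (N s) = Nn m.+1 s.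
Proof. by elim: m => //= m ->. Qed.

Lemma Nn_equiv m s s' : sequiv s s' -> sequiv (Nn m s) (Nn m s').
Proof. elim: m => //= m IH e; apply: N_equiv; exact: IH. Qed.

Lemma Nn_add m a b : Nn m (SAdd a b) = SAdd (Nn m a) (Nn m b).
Proof. by elim: m => //= m ->. Qed.
Lemma Nn_scale m a s : Nn m (SScale a s) = SScale a (Nn m s).
Proof. by elim: m => //= m ->. Qed.
Lemma Nn_zero m : Nn m SZero = SZero.
Proof. by elim: m => //= m ->. Qed.
Lemma Nn_sum_sups m l : Nn m (sum_sups l) = sum_sups [seq (p.1, Nn m p.2) | p <- l].
Proof. elim: l => /= [|p l IH]; by rewrite ?Nn_zero // Nn_add Nn_scale IH. Qed.

Lemma coef_N s u : coef (N s) u = ev (fun t => coef (Red t) u) s.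
Proof. exact: coef_sbind. Qed.

Lemma cinv_Red u : cinv (fun t => coef (Red t) u).
Proof. move=> t t' e; apply: coef_sequiv; exact: Red_equiv. Qed.

Lemma ev_group s h : cinv h ->
  ev h s = \sum_(t <- dedup [seq p.2 | p <- flat s]) coef s t * h t.
Proof. move=> hh; apply: grouping => //; [exact: dedup_pw | move=> u hu; exact: dedup_cover]. Qed.

Lemma ev_eq s h1 h2 : cinv h1 -> cinv h2 -> (forall t, coef s t != 0 -> h1 t = h2 t) ->
  ev h1 s = ev h2 s.
Proof.
move=> c1 c2 H; rewrite (ev_group _ c1) (ev_group _ c2); apply: eq_bigr => t _.
case: (boolP (coef s t == 0)) => [/eqP ->|h]; by rewrite ?mul0r // H.
Qed.

Lemma N_isval s : isval s -> sequiv (N s) s.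
Proof.
move=> hv; apply: coef_complete => u; rewrite coef_N.
rewrite (@ev_eq s _ (fun w => delta w u)); [by [] | exact: cinv_Red | exact: cinv_delta |].
move=> t /hv hb; by rewrite Red_basis // cfT.
Qed.

Definition Ev m T := (forall j, (j < m)%N -> good (Nn j T)) /\ isval (Nn m T).

Lemma isval_good s : isval s -> good s.
Proof. move=> h t /h; by left. Qed.

Lemma Ev_equiv m T T' : sequiv T T' -> Ev m T -> Ev m T'.
Proof.
move=> e [h1 h2]; split; last exact: isval_equiv (Nn_equiv m e) h2.
move=> j hj; exact: good_equiv (Nn_equiv j e) (h1 j hj).
Qed.

Lemma Ev_val m T M : Ev m T -> (m <= M)%N -> sequiv (Nn M T) (Nn m T).
Proof.
move=> [_ hv]; elim: M => [|M IH]; first by rewrite leqn0 => /eqP ->; ceqs.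
rewrite leq_eqVlt => /orP [/eqP <-|hlt]; first by ceqs.
have e := IH hlt; rewrite /=; apply: seq_trans (N_equiv e) _; exact: N_isval.
Qed.

Lemma Ev_mono m T M : Ev m T -> (m <= M)%N -> Ev M T.
Proof.
move=> H hm; have [h1 h2] := H; split; last exact: isval_equiv (seq_sym (Ev_val H hm)) h2.
move=> j hj; case: (ltnP j m) => hjm; first exact: h1.
apply: isval_good; exact: isval_equiv (seq_sym (Ev_val H hjm)) h2.
Qed.

Lemma reduces_trans s w1 w2 : reduces_to s w1 -> sequiv w1 w2 -> reduces_to s w2.
Proof. move=> [s' [h1 h2]] e; exists s'; split=> //; exact: seq_trans h2 e. Qed.

Lemma Ev_reduces m T : Ev m T -> reduces_to T (Nn m T).
Proof.
elim: m T => [|m IH] T H; first by exists T; split; [constructor|ceqs].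
have [h1 h2] := H.
case: (classic (isval T)) => hv.
- exists T; split; first constructor.
  apply: seq_sym; apply: (@Ev_val 0 T); last done. by split.
- have hs := step_of_good (h1 0 (ltn0Sn _)) hv.
  have H' : Ev m (N T).
  { split; last by rewrite Nn_S. move=> j hj; rewrite Nn_S; exact: h1. }
  have [s' [hm he]] := IH _ H'.
  exists s'; split; first exact: ms_step hs hm.
  by rewrite -Nn_S.
Qed.

Lemma Ev_of_msteps T T' : msteps T T' -> isval T' -> exists m, Ev m T /\ sequiv T' (Nn m T).
Proof.
elim=> {T T'} [s hv|s1 s2 s3 hst _ IH hv].
- exists 0%N; split; last by ceqs. by split.
- have [m [hE e]] := IH hv.
  have [e2 hg _] := step_N hst.
  have hE' := Ev_equiv e2 hE.
  exists m.+1; split.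
  + split; last by rewrite -Nn_S; case: hE'.
    case=> [|j] hj; first exact: hg.
    rewrite -Nn_S; case: hE' => h _; exact: h.
  + rewrite -Nn_S; apply: seq_trans e _; exact: Nn_equiv.
Qed.

Lemma reduces_val T W : reduces_to T W -> isval W -> exists m, Ev m T /\ sequiv W (Nn m T).
Proof.
move=> [s' [hm he]] hv.
have [m [hE e]] := Ev_of_msteps hm (isval_equiv (seq_sym he) hv).
exists m; split=> //; exact: seq_trans (seq_sym he) e.
Qed.

Lemma Ev_unique m m' T : Ev m T -> Ev m' T -> sequiv (Nn m T) (Nn m' T).
Proof.
move=> H H'; apply: seq_trans (seq_sym (Ev_val H (leq_maxl m m'))) _.
exact: Ev_val H' (leq_maxr m m').
Qed.

Lemma isval_sum_sups l : List.Forall (fun p => isval p.2) l -> isval (sum_sups l).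
Proof.
elim=> [|p l1 hp _ IH] t /=; first by rewrite cf0 eqxx.
rewrite cfD cfZ; case: (boolP (coef p.2 t == 0)) => [/eqP ->|h].
- rewrite mulr0 add0r; exact: IH.
- move=> _; exact: hp.
Qed.

Lemma good_sum_sups l : List.Forall (fun p => good p.2) l -> good (sum_sups l).
Proof.
elim=> [|p l1 hp _ IH] t /=; first by rewrite cf0 eqxx.
rewrite cfD cfZ; case: (boolP (coef p.2 t == 0)) => [/eqP ->|h].
- rewrite mulr0 add0r; exact: IH.
- move=> _; exact: hp.
Qed.

Lemma Ev_lin M l : List.Forall (fun p => Ev M p.2) l -> Ev M (sum_sups l).
Proof.
move=> H; split.
- move=> j hj; rewrite Nn_sum_sups; apply: good_sum_sups.
  elim: H => [|p l' hp _ IH]; constructor => //=. case: hp => h _; exact: h.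
- rewrite Nn_sum_sups; apply: isval_sum_sups.
  elim: H => [|p l' hp _ IH]; constructor => //=. by case: hp.
Qed.

Local Open Scope ring_scope.
Local Open Scope nat_scope.

Lemma bitket_basis b : is_basis (bitket b).
Proof. by rewrite /bitket; case: (b == 0)%N. Qed.
Lemma bitket_closed b : tclosed [::] (bitket b).
Proof. by rewrite /bitket; case: (b == 0)%N. Qed.

Lemma ketS m i : (0 < m)%N -> ket m.+1 i = Pair (bitket (i %/ 2 ^ m)) (ket m (i %% 2 ^ m)).
Proof. by case: m. Qed.

Lemma ket_basis n i : is_basis (ket n i) && tclosed [::] (ket n i).
Proof.
elim: n i => [|m IH] i //; case: m IH => [|m] IH; first by rewrite /= bitket_basis bitket_closed.
rewrite ketS //=. have /andP [h1 h2] := IH (i %% 2 ^ m.+1).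
by rewrite bitket_basis bitket_closed h1 h2.
Qed.

Lemma p2 e : (0 < 2 ^ e)%N.
Proof. by rewrite expn_gt0. Qed.

Lemma bitket_inj a b : (a < 2)%N -> (b < 2)%N -> tequiv (bitket a) (bitket b) -> a = b.
Proof.
rewrite /bitket; case: a => [|[|a]] //; case: b => [|[|b]] // _ _.
- by move/shape_ket0.
- by move/shape_ket1.
Qed.

Lemma ket_inj n i j : (1 <= n)%N -> (i < 2 ^ n)%N -> (j < 2 ^ n)%N ->
  tequiv (ket n i) (ket n j) -> i = j.
Proof.
elim: n i j => [|m IH] i j // _; case: m IH => [|m] IH.
- move=> hi hj /=; exact: bitket_inj.
- move=> hi hj; rewrite [ket m.+2 i]ketS // [ket m.+2 j]ketS // => /shape_pair [a [c [[<- <-] [h1 h2]]]].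
  have hlt : forall x, (x < 2 ^ m.+2)%N -> (x %/ 2 ^ m.+1 < 2)%N.
  { move=> x hx; rewrite ltn_divLR ?expn_gt0 //; by rewrite -expnS. }
  have e1 := bitket_inj (hlt _ hi) (hlt _ hj) h1.
  have e2 := IH _ _ (ltn0Sn _) (ltn_pmod _ (p2 _)) (ltn_pmod _ (p2 _)) h2.
  by rewrite (divn_eq i (2 ^ m.+1)) (divn_eq j (2 ^ m.+1)) e1 e2.
Qed.

Lemma sem_Bn n s : (1 <= n)%N ->
  sem (Bn n) env0 s <-> exists i, (i < 2 ^ n)%N /\ s = STerm (ket n i).
Proof.
elim: n s => [|m IH] s // _; case: m IH => [|m] IH.
- split=> /=.
  + case=> ->; [by exists 0%N | by exists 1%N].
  + case=> i [hi ->]; rewrite /bitket; case: i hi => [|[|i]] //= _; by [left|right].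
- rewrite (_ : Bn m.+2 = TProd TBool (Bn m.+1)) //; split.
  + move=> [v [w [hv [hw ->]]]]; have [j [hj ->]] := (IH w isT).1 hw; clear hw.
    case: hv => ->.
    * exists j; split; first by apply: (leq_trans hj); rewrite leq_exp2l.
      by rewrite [ket m.+2 _]ketS // divn_small // modn_small.
    * exists (2 ^ m.+1 + j)%N; split; first by rewrite [2 ^ m.+2]expnS mul2n -addnn ltn_add2l.
      rewrite [ket m.+2 _]ketS // divnDl ?dvdnn // divnn p2 (divn_small hj) addn0.
      by rewrite modnDl modn_small.
  + move=> [i [hi ->]]; rewrite [ket m.+2 _]ketS //.
    exists (STerm (bitket (i %/ 2 ^ m.+1))), (STerm (ket m.+1 (i %% 2 ^ m.+1))).
    split; last split; last by [].
    * have : (i %/ 2 ^ m.+1 < 2)%N by rewrite ltn_divLR ?expn_gt0 // -expnS.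
      rewrite /bitket; case: (i %/ 2 ^ m.+1) => [|[|]] //= _; by [left|right].
    * apply/(IH _ isT); exists (i %% 2 ^ m.+1); split=> //; exact: ltn_pmod (p2 _).
Qed.

Local Open Scope ring_scope.

Section Kets.
Variable n : nat.
Hypothesis hn : (1 <= n)%N.
Notation I := 'I_(2 ^ n).

Definition kt (i : I) : term := ket n i.

Lemma delta_kt (i j : I) : delta (kt i) (kt j) = (i == j)%:R.
Proof.
rewrite deltaE; case: teqbP => [e|ne].
- by rewrite (val_inj (ket_inj hn (ltn_ord i) (ltn_ord j) e)) eqxx.
- case: eqP => [eij|//]; case: ne; rewrite eij; exact: teq_refl.
Qed.

Definition Xsum (f : I -> algC) : sup :=
  sum_sups [seq (f i, STerm (kt i)) | i <- index_enum I].

Lemma ev_Xsum h f : ev h (Xsum f) = \sum_(i : I) f i * h (kt i).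
Proof. by rewrite ev_sum_sups big_map; apply: eq_bigr => i _; rewrite evT. Qed.

Lemma coef_Xsum f u : coef (Xsum f) u = \sum_(i : I) f i * delta (kt i) u.
Proof. exact: (ev_Xsum (fun w => delta w u) f). Qed.

Lemma coef_Xsum_kt f j : coef (Xsum f) (kt j) = f j.
Proof.
rewrite coef_Xsum (bigD1 j) //= delta_kt eqxx mulr1 big1 ?addr0 //.
move=> i /negbTE hi; by rewrite delta_kt hi mulr0.
Qed.

Definition inK (X : sup) := forall u, coef X u != 0 -> exists j : I, tequiv u (kt j).

Lemma inK_equiv X Y : sequiv X Y -> inK X -> inK Y.
Proof. move=> e h u; rewrite -(coef_sequiv e); exact: h. Qed.

Lemma inK_Xsum f : inK (Xsum f).
Proof.
move=> u; rewrite coef_Xsum => /big_nz [i [_ h]]; exists i.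
move: h; rewrite deltaE; case: teqbP => [e _|]; last by rewrite mulr0 eqxx.
exact: teq_sym.
Qed.

Lemma inK_decomp X : inK X -> sequiv X (Xsum (fun i => coef X (kt i))).
Proof.
move=> hX; apply: coef_complete => u; rewrite coef_Xsum.
case: (classic (exists j : I, tequiv u (kt j))) => [[j e]|ne].
- rewrite (coef_r _ e) (bigD1 j) //= (delta_r _ e) delta_refl mulr1 big1 ?addr0 //.
  move=> i hi; rewrite (delta_r _ e) delta_kt (negbTE hi) mulr0 //.
- rewrite big1.
  + apply/eqP; apply: contraT => h; case: ne; exact: hX.
  + move=> i _; rewrite deltaE; case: teqbP => [e|]; last by rewrite mulr0.
    case: ne; exists i; exact: teq_sym.
Qed.

Lemma sem_kt (i : I) : sem (Bn n) env0 (STerm (kt i)).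
Proof. apply/(sem_Bn _ hn); by exists i. Qed.

Lemma sharp_inK v : sem (TSharp (Bn n)) env0 v -> inK v.
Proof.
move=> [[l [hl e]] _]; apply: inK_equiv (seq_sym e) _.
move=> u; rewrite coef_sum_sups => /big_nz [p [hp h]].
have := proj1 (List.Forall_forall _ _) hl _ hp => /(sem_Bn _ hn) [i [hi he]].
move: h; rewrite he cfT deltaE; case: teqbP => [e' _|]; last by rewrite mulr0 eqxx.
exists (Ordinal hi); exact: teq_sym.
Qed.

Lemma floorvE v (i : I) : floorv n v i 0 = coef v (kt i).
Proof. by rewrite /floorv mxE. Qed.

Lemma ip_inK X Y : inK X ->
  ip X Y = \sum_(i : I) (coef X (kt i))^* * coef Y (kt i).
Proof.
move=> hX.
have -> : ip X Y = (ev (fun t => (coef Y t)^*) X)^*.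
{ rewrite /ip /ev rmorph_sum; apply: eq_bigr => p _.
  rewrite rmorphM /= conjCK /coef mulr_sumr; apply: eq_bigr => q _.
  by rewrite mulrA delta_sym. }
have hc : cinv (fun t => (coef Y t)^*) by move=> t t' e; rewrite (coef_r _ e).
rewrite (ev_sequiv hc (inK_decomp hX)) ev_Xsum rmorph_sum.
by apply: eq_bigr => i _; rewrite rmorphM /= conjCK.
Qed.

Lemma ip_cdot X Y : inK X -> ip X Y = cdot (floorv n X) (floorv n Y).
Proof. move=> hX; rewrite ip_inK // /cdot; apply: eq_bigr => i _; by rewrite !floorvE. Qed.

End Kets.

Local Open Scope ring_scope.

Section LinAlg.
Variables p q : nat.

Lemma cdotDl (u v w : 'cV[algC]_q) : cdot (u + v) w = cdot u w + cdot v w.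
Proof. rewrite /cdot -big_split; apply: eq_bigr => i _; by rewrite mxE rmorphD mulrDl. Qed.
Lemma cdotDr (u v w : 'cV[algC]_q) : cdot w (u + v) = cdot w u + cdot w v.
Proof. rewrite /cdot -big_split; apply: eq_bigr => i _; by rewrite mxE mulrDr. Qed.
Lemma cdotZl a (u w : 'cV[algC]_q) : cdot (a *: u) w = a^* * cdot u w.
Proof. rewrite /cdot mulr_sumr; apply: eq_bigr => i _; by rewrite mxE rmorphM mulrA. Qed.
Lemma cdotZr a (u w : 'cV[algC]_q) : cdot w (a *: u) = a * cdot w u.
Proof. rewrite /cdot mulr_sumr; apply: eq_bigr => i _; by rewrite mxE mulrCA. Qed.
Lemma cdot_suml (X : 'I_q -> 'cV[algC]_p) w : cdot (\sum_i X i) w = \sum_i cdot (X i) w.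
Proof.
rewrite /cdot exchange_big; apply: eq_bigr => r _.
by rewrite summxE rmorph_sum mulr_suml.
Qed.
Lemma cdot_sumr (X : 'I_q -> 'cV[algC]_p) w : cdot w (\sum_i X i) = \sum_i cdot w (X i).
Proof.
rewrite /cdot exchange_big; apply: eq_bigr => r _.
by rewrite summxE mulr_sumr.
Qed.
End LinAlg.

Section Iso.
Variables p q : nat.
Variable A : 'M[algC]_(p, q).
Definition ee (i : 'I_q) : 'cV[algC]_q := delta_mx i 0.
Definition Gr (i j : 'I_q) := cdot (A *m ee i) (A *m ee j).

Lemma cdot_ee i j : cdot (ee i) (ee j) = (i == j)%:R.
Proof.
rewrite /cdot (bigD1 i) //= big1 ?addr0.
- rewrite /ee !mxE !eqxx /= rmorph1 mul1r; by case: (i == j); rewrite ?eqxx.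
- move=> r /negbTE h; by rewrite /ee !mxE h /= rmorph0 mul0r.
Qed.

Lemma cV_decomp (u : 'cV[algC]_q) : u = \sum_i u i 0 *: ee i.
Proof.
rewrite {1}(matrix_sum_delta u); apply: eq_bigr => i _; by rewrite big_ord1.
Qed.

Lemma expand (B : 'M[algC]_(p, q)) u v :
  cdot (B *m u) (B *m v) = \sum_i \sum_j (u i 0)^* * v j 0 * cdot (B *m ee i) (B *m ee j).
Proof.
rewrite {1}(cV_decomp u) {1}(cV_decomp v) !mulmx_sumr cdot_suml.
apply: eq_bigr => i _; rewrite cdot_sumr; apply: eq_bigr => j _.
by rewrite -!scalemxAr cdotZl cdotZr mulrA.
Qed.
End Iso.

Section Iso2.
Variables p q : nat.
Variable A : 'M[algC]_(p, q).
Hypothesis HA : forall c : 'cV[algC]_q, cdot c c = 1 -> cdot (A *m c) (A *m c) = 1.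

Let Q (c : 'cV[algC]_q) := cdot (A *m c) (A *m c).

Lemma Q_add x y : Q (x + y) = Q x + Q y + cdot (A *m x) (A *m y) + cdot (A *m y) (A *m x).
Proof. rewrite /Q mulmxDr cdotDl !cdotDr; ring. Qed.

Lemma two_neq0 : (2 : algC) != 0.
Proof. by rewrite pnatr_eq0. Qed.

Lemma Q2 d : cdot d d = 2 -> Q d = 2.
Proof.
move=> hd.
set s := (sqrtC (2 : algC))^-1.
have hs0 : 0 <= s by rewrite invr_ge0 sqrtC_ge0 ler0n.
have hsr : s^* = s by apply: conj_Creal; exact: ger0_real.
have hss : s * s = 2^-1 by rewrite -expr2 exprVn sqrtCK.
have := HA (c := s *: d); rewrite -scalemxAr !cdotZl !cdotZr hsr hd mulrA hss mulVf ?two_neq0 //.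
move=> /(_ erefl); rewrite mulrA hss => h.
have : 2 * (2^-1 * Q d) = 2 by rewrite h mulr1.
by rewrite mulrA mulfV ?two_neq0 // mul1r.
Qed.

Lemma Gr_diag i : Gr A i i = 1.
Proof. apply: HA; by rewrite cdot_ee eqxx. Qed.

Lemma Gr_off i j : i != j -> Gr A i j = 0.
Proof.
move=> hij.
have hji : (j == i) = false by rewrite eq_sym (negbTE hij).
have e1 : Q (ee i + ee j) = 2.
{ apply: Q2; rewrite cdotDl !cdotDr !cdot_ee eqxx (negbTE hij) hji eqxx /=; rewrite addr0 add0r -mulr2n //. }
have e2 : Q (ee i + 'i *: ee j) = 2.
{ apply: Q2; rewrite cdotDl !cdotDr !cdotZl !cdotZr !cdot_ee eqxx (negbTE hij) hji eqxx /=.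
  rewrite conjCi !mulr0 !addr0 add0r mulr1 mulNr mulCii opprK -mulr2n //. }
move: e1 e2; rewrite !Q_add -!scalemxAr !cdotZl !cdotZr conjCi.
rewrite /Q -/(Gr A i i) -/(Gr A j j) -/(Gr A i j) -/(Gr A j i) !Gr_diag.
move=> h1 h2.
have h3 : cdot (A *m ('i *: ee j)) (A *m ('i *: ee j)) = 1.
{ by rewrite -scalemxAr cdotZl cdotZr conjCi -/(Gr A j j) Gr_diag mulr1 mulNr mulCii opprK. }
rewrite h3 in h2.
have s1 : Gr A i j + Gr A j i = 0.
{ have := congr1 (fun z => z - 2) h1; rewrite /= subrr => <-; ring. }
have s2 : 'i * (Gr A i j - Gr A j i) = 0.
{ have := congr1 (fun z => z - 2) h2; rewrite /= subrr => <-; ring. }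
move: s2 => /eqP; rewrite mulf_eq0 (negbTE (@neq0Ci algC)) /= subr_eq0 => /eqP s2.
move: s1; rewrite s2 -mulr2n -mulr_natr => /eqP; rewrite mulf_eq0 (negbTE two_neq0) orbF.
by move/eqP.
Qed.

Lemma Gr_id i j : Gr A i j = (i == j)%:R.
Proof. case: eqP => [->|/eqP h]; [exact: Gr_diag | exact: Gr_off]. Qed.

Lemma iso_all u v : cdot (A *m u) (A *m v) = cdot u v.
Proof.
have -> : cdot u v = cdot ((1%:M : 'M[algC]_q) *m u) (1%:M *m v) by rewrite !mul1mx.
rewrite !expand; apply: eq_bigr => i _; apply: eq_bigr => j _.
by rewrite !mul1mx cdot_ee -/(Gr A i j) Gr_id.
Qed.

Lemma dim_le : (q <= p)%N.
Proof.
set B := (map_mx (fun x : algC => x^*) A)^T.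
have hBA : B *m A = 1%:M.
{ apply/matrixP => i j; rewrite !mxE -Gr_id /Gr /cdot; apply: eq_bigr => r _.
  by rewrite /B /ee -!colE !mxE. }
have := mxrankM_maxl B A; rewrite hBA mxrank1 => h.
exact: leq_trans h (rank_leq_col B).
Qed.
End Iso2.

Local Open Scope ring_scope.

Lemma svalue_Xsum m f : svalue (@Xsum m f) && sclosed [::] (@Xsum m f).
Proof.
rewrite /Xsum; elim: (index_enum _) => //= i l /andP [h1 h2].
have /andP [k1 k2] := ket_basis m i.
by rewrite /kt k1 k2 h1 h2.
Qed.

Lemma Xsum_sem m (hm : (1 <= m)%N) f : \sum_i (f i)^* * f i = 1 ->
  sem (TSharp (Bn m)) env0 (@Xsum m f).
Proof.
move=> h1; split.
- exists [seq (f i, STerm (@kt m i)) | i <- index_enum 'I_(2 ^ m)]; split; last by ceqs.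
  apply/List.Forall_forall => p /List.in_map_iff [i [<- _]] /=; exact: sem_kt.
- split; first by exists (@Xsum m f); split; [ceqs | exact: svalue_Xsum].
  rewrite (ip_inK hm _ (@inK_Xsum m f)).
  under eq_bigr => i _ do rewrite coef_Xsum_kt //.
  by rewrite h1 normr1 expr1n.
Qed.

Lemma isval_sharp m (hm : (1 <= m)%N) w : sem (TSharp (Bn m)) env0 w -> isval w.
Proof.
move=> /(sharp_inK hm) hw u /hw [j e].
have /andP [k1 _] := ket_basis m j; by rewrite (tequiv_basis e).
Qed.

Lemma unit_sharp m (hm : (1 <= m)%N) w : sem (TSharp (Bn m)) env0 w ->
  cdot (floorv m w) (floorv m w) = 1.
Proof.
move=> hw; have hK := sharp_inK hm hw.
have [_ [_ hn]] := hw.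
rewrite (ip_cdot hm _ hK) in hn.
have h0 : 0 <= cdot (floorv m w) (floorv m w).
{ apply: sumr_ge0 => i _; rewrite mulrC; exact: mul_conjC_ge0. }
move: hn; rewrite ger0_norm // => /eqP; rewrite sqrf_eq1 => /orP [/eqP //|/eqP h].
by move: h0; rewrite h oppr_ge0 ler10.
Qed.

Lemma sum_sups_map_equiv (T : Type) (f : T -> algC) (g g' : T -> sup) l :
  (forall x, sequiv (g x) (g' x)) ->
  sequiv (sum_sups [seq (f x, g x) | x <- l]) (sum_sups [seq (f x, g' x) | x <- l]).
Proof. move=> H; elim: l => /= [|x l IH]; first ceqs. apply: seq_add => //; exact: seq_scale. Qed.

Lemma floor_equiv m X Y : sequiv X Y -> floorv m X = floorv m Y.
Proof. move=> e; apply/matrixP => i j; by rewrite !mxE (coef_sequiv e). Qed.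

Section Main.
Variables (n k : nat) (hn : (1 <= n)%N) (hk : (1 <= k)%N) (lam : term).
Hypothesis Hl : forall v, sem (TSharp (Bn n)) env0 v ->
  realizes (app_sup lam v) (sem (TSharp (Bn k)) env0).
Notation In := 'I_(2 ^ n).

Lemma app_Xsum f : app_sup lam (@Xsum n f) =
  sum_sups [seq (f i, STerm (App lam (@kt n i))) | i <- index_enum In].
Proof. rewrite /app_sup /slift /Xsum; by elim: (index_enum In) => //= i l ->. Qed.

Lemma Xsum_delta (i : In) : sequiv (@Xsum n (fun j => (j == i)%:R)) (STerm (@kt n i)).
Proof.
apply: coef_complete => u; rewrite coef_Xsum cfT (bigD1 i) //= eqxx mul1r big1 ?addr0 //.
move=> j /negbTE ->; by rewrite mul0r.
Qed.

Lemma basis_out (i : In) : exists pr : sup * nat,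
  [/\ Ev pr.2 (STerm (App lam (@kt n i))),
      sequiv pr.1 (Nn pr.2 (STerm (App lam (@kt n i)))) &
      sem (TSharp (Bn k)) env0 pr.1].
Proof.
have hv : sem (TSharp (Bn n)) env0 (@Xsum n (fun j => (j == i)%:R)).
{ apply: Xsum_sem => //; rewrite (bigD1 i) //= eqxx rmorph1 mul1r big1 ?addr0 //.
  move=> j /negbTE ->; by rewrite mulr0. }
have [w [hr hw]] := Hl hv.
have [m [hE e]] := reduces_val hr (isval_sharp hk hw).
have e2 : sequiv (app_sup lam (@Xsum n (fun j => (j == i)%:R))) (STerm (App lam (@kt n i))).
{ apply: (slift_equiv (g := App lam) (g' := App lam)) (Xsum_delta i) => t t' h.
  apply: teq_app => //; exact: teq_refl. }
exists (w, m); split => /=.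
- exact: Ev_equiv e2 hE.
- exact: seq_trans e (Nn_equiv m e2).
- exact: hw.
Qed.

Section WithW.
Variables (W : In -> sup) (mm : In -> nat).
Hypothesis HW : forall i, [/\ Ev (mm i) (STerm (App lam (@kt n i))),
      sequiv (W i) (Nn (mm i) (STerm (App lam (@kt n i)))) &
      sem (TSharp (Bn k)) env0 (W i)].

Let M := \max_(i : In) mm i.
Definition Amat : 'M[algC]_(2 ^ k, 2 ^ n) := \matrix_(r, i) coef (W i) (@kt k r).
Definition Wsum (c : 'cV[algC]_(2 ^ n)) := sum_sups [seq (c i 0, W i) | i <- index_enum In].

Lemma EvM i : Ev M (STerm (App lam (@kt n i))).
Proof. have [h _ _] := HW i; apply: Ev_mono h _; exact: leq_bigmax. Qed.

Lemma NnM i : sequiv (Nn M (STerm (App lam (@kt n i)))) (W i).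
Proof.
have [h e _] := HW i; apply: seq_trans (Ev_val h (leq_bigmax _)) _; exact: seq_sym.
Qed.

Lemma out_X f : Ev M (app_sup lam (@Xsum n f)) /\
  sequiv (Nn M (app_sup lam (@Xsum n f))) (sum_sups [seq (f i, W i) | i <- index_enum In]).
Proof.
rewrite app_Xsum; split.
- apply: Ev_lin; apply/List.Forall_forall => p /List.in_map_iff [i [<- _]] /=; exact: EvM.
- rewrite Nn_sum_sups -map_comp; apply: sum_sups_map_equiv => i; exact: NnM.
Qed.

Lemma out_v v : sem (TSharp (Bn n)) env0 v ->
  Ev M (app_sup lam v) /\ sequiv (Nn M (app_sup lam v)) (Wsum (floorv n v)).
Proof.
move=> hv.
have e := inK_decomp hn (sharp_inK hn hv).
have e' : sequiv (app_sup lam v) (app_sup lam (@Xsum n (fun i => coef v (@kt n i)))).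
{ apply: (slift_equiv (g := App lam) (g' := App lam)) e => t t' h.
  apply: teq_app => //; exact: teq_refl. }
have [h1 h2] := out_X (fun i => coef v (@kt n i)).
split; first exact: Ev_equiv (seq_sym e') h1.
apply: seq_trans (Nn_equiv M e') _.
rewrite /Wsum (_ : [seq (floorv n v i 0, W i) | i <- index_enum In] =
   [seq (coef v (@kt n i), W i) | i <- index_enum In]) //.
apply: eq_map => i; by rewrite floorvE.
Qed.

Lemma floor_Wsum c : floorv k (Wsum c) = Amat *m c.
Proof.
apply/matrixP => r j; rewrite ord1 !mxE /Wsum.
rewrite -/(coef _ (ket k r)) coef_sum_sups big_map.
apply: eq_big => // i _; by rewrite !mxE mulrC.
Qed.

Lemma out_w v w : sem (TSharp (Bn n)) env0 v -> sem (TSharp (Bn k)) env0 w ->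
  reduces_to (app_sup lam v) w -> sequiv w (Wsum (floorv n v)).
Proof.
move=> hv hw hr.
have [m [hE e]] := reduces_val hr (isval_sharp hk hw).
have [h1 h2] := out_v hv.
apply: seq_trans e _; apply: seq_trans (Ev_unique hE h1) h2.
Qed.

Lemma out_ex v : sem (TSharp (Bn n)) env0 v ->
  exists w, sem (TSharp (Bn k)) env0 w /\ sequiv w (Wsum (floorv n v)).
Proof.
move=> hv; have [w [hr hw]] := Hl hv; exists w; split=> //; exact: out_w.
Qed.

Lemma represents_A : represents n k lam (fun u => Amat *m u).
Proof.
move=> v w hv hw; split.
- move=> hr; by rewrite -floor_Wsum -(floor_equiv _ (out_w hv hw hr)).
- move=> h; have [w0 [hw0 e0]] := out_ex hv.
  have hf : floorv k w = floorv k w0 by rewrite -h -floor_Wsum (floor_equiv _ e0).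
  have ew : sequiv w w0.
  { apply: coef_complete => u.
    rewrite (coef_sequiv (inK_decomp hk (sharp_inK hk hw)))
            (coef_sequiv (inK_decomp hk (sharp_inK hk hw0))) !coef_Xsum.
    apply: eq_bigr => i _; by rewrite -!floorvE hf. }
  have [h1 h2] := out_v hv.
  apply: reduces_trans (Ev_reduces h1) _.
  apply: seq_trans h2 _; apply: seq_trans (seq_sym e0) (seq_sym ew).
Qed.

Lemma norm_A c : cdot c c = 1 -> cdot (Amat *m c) (Amat *m c) = 1.
Proof.
move=> hc.
have hv : sem (TSharp (Bn n)) env0 (@Xsum n (fun i => c i 0)) by apply: Xsum_sem.
have hfl : floorv n (@Xsum n (fun i => c i 0)) = c.
{ apply/matrixP => r j; rewrite ord1 floorvE coef_Xsum_kt //. }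
have [w0 [hw0 e0]] := out_ex hv.
have := unit_sharp hk hw0; by rewrite (floor_equiv _ e0) floor_Wsum hfl.
Qed.
End WithW.

Lemma main_pack : exists A : 'M[algC]_(2 ^ k, 2 ^ n),
  represents n k lam (fun u => A *m u) /\
  (forall c, cdot c c = 1 -> cdot (A *m c) (A *m c) = 1).
Proof.
pose P i (pr : sup * nat) := [/\ Ev pr.2 (STerm (App lam (@kt n i))),
      sequiv pr.1 (Nn pr.2 (STerm (App lam (@kt n i)))) &
      sem (TSharp (Bn k)) env0 pr.1].
pose f i := proj1_sig (constructive_indefinite_description (P i) (basis_out i)).
have hf : forall i, P i (f i) by move=> i; exact: proj2_sig (constructive_indefinite_description (P i) (basis_out i)).
exists (Amat (fun i => (f i).1)); split.
- exact: (represents_A (mm := fun i => (f i).2)).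
- exact: (norm_A (mm := fun i => (f i).2)).
Qed.
End Main.

Local Open Scope ring_scope.

Lemma lolli_inv n k s : sem (TLolli (TSharp (Bn n)) (TSharp (Bn k))) env0 s ->
  exists lam, forall v, sem (TSharp (Bn n)) env0 v ->
    realizes (app_sup lam v) (sem (TSharp (Bn k)) env0).
Proof. move=> [x [b [_ [_ H]]]]; by exists (Lam x b). Qed.

Local Open Scope nat_scope.
Theorem mainTheorem3 (n k : nat) : (1 <= n)%N -> (1 <= k)%N ->
  [/\ (* (1) *)
      ((n <= k)%N -> forall (x : nat) (b : sup), tclosed [::] (Lam x b) ->
        sem (TLolli (TSharp (Bn n)) (TSharp (Bn k))) env0 (STerm (Lam x b)) ->
        exists F : 'cV[algC]_(2 ^ n) -> 'cV[algC]_(2 ^ k),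
          represents n k (Lam x b) F /\ isometry_op F),
      (* (2) *)
      (k = n -> forall (x : nat) (b : sup), tclosed [::] (Lam x b) ->
        sem (TLolli (TSharp (Bn n)) (TSharp (Bn n))) env0 (STerm (Lam x b)) ->
        exists F : 'cV[algC]_(2 ^ n) -> 'cV[algC]_(2 ^ n),
          represents n n (Lam x b) F /\ unitary_op F)
    & (* (3) *)
      ((k < n)%N -> forall s : sup,
        ~ sem (TLolli (TSharp (Bn n)) (TSharp (Bn k))) env0 s)].
Proof.
move=> hn hk; split.
- move=> _ x b _ [x' [b' [[-> ->] [_ Hl]]]].
  have [A [hr hA]] := main_pack hn hk Hl.
  exists (fun u => (A *m u)%R); split => //; exact: iso_all hA.
- move=> _ x b _ [x' [b' [[-> ->] [_ Hl]]]].
  have [A [hr hA]] := main_pack hn hn Hl.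
  exists (fun u => (A *m u)%R); split => //; exact: iso_all hA.
- move=> hkn s /lolli_inv [lam Hl].
  have [A [_ hA]] := main_pack hn hk Hl.
  have := dim_le hA; rewrite leq_exp2l // leqNgt hkn //.
Qed.
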